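(* Let $G=(V,E)$ be a finite simple undirected graph and let $v\in V$. Suppose $v$ is unique under anonymity-cascade with $\ell=1$, i.e., there exists a node $u\in V$ adjacent to $v$ such that (i) no node $x\in V\setminus\{u\}$ is $1$-equivalent to $u$, and (ii) no node $v'\in V(N_1(u))\setminus\{u,v\}$ is $1$-equivalent to $v$. Then $v$ is unique under $2$-$k$-anonymity, i.e., no node $w\in V\setminus\{v\}$ is $2$-equivalent to $v$.
   Context: For nodes $v,w$, the distance $d(v,w)$ is the minimum number of edges on a path from $v$ to $w$ ($\infty$ if none). For $d\ge 0$ and $v\in V$, the $d$-neighborhood $N_d(v)$ is the subgraph of $G$ induced by all nodes at distance at most $d$ from $v$ (so $N_1(v)$ is the ego network of $v$, including $v$). A graph isomorphism between $H=(V_H,E_H)$ and $H'=(V_{H'},E_{H'})$ is a bijection $\phi:V_H\to V_{H'}$ with $\{\phi(a),\phi(b)\}\in E_{H'}$ iff $\{a,b\}\in E_H$. Two nodes $v,w\in V$ are $d$-equivalent if there is an isomorphism $\phi$ from $N_d(v)$ to $N_d(w)$ with $\phi(v)=w$. A node is unique under $d$-$k$-anonymity if it is $d$-equivalent to no other node of $G$. *)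

(* Defs.v *)
From mathcomp Require Import all_boot.
Set Implicit Arguments. Unset Strict Implicit. Unset Printing Implicit Defensive.

(* A finite simple undirected graph is a vertex finType T with an edge
   relation e : rel T that is symmetric and irreflexive. *)

Definition within_dist (T : finType) (e : rel T) (d : nat) (v x : T) : Prop :=
  exists p : seq T, size p <= d /\ path e v p /\ last v p = x.

(* v and w are d-equivalent: a bijection phi from the vertex set of N_d(v)
   onto that of N_d(w) (induced subgraphs), preserving and reflecting
   adjacency, with phi v = w. *)
Definition d_equiv (T : finType) (e : rel T) (d : nat) (v w : T) : Prop :=
  exists phi : T -> T,
    [/\ (forall a, within_dist e d v a -> within_dist e d w (phi a)),
        (forall b, within_dist e d w b -> exists2 a, within_dist e d v a & phi a = b),
        (forall a b, within_dist e d v a -> within_dist e d v b -> phi a = phi b -> a = b),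
        phi v = w &
        (forall a b, within_dist e d v a -> within_dist e d v b ->
           e (phi a) (phi b) = e a b)].

(* Main.v *)
Require Import Defs.
From mathcomp Require Import all_boot.

Lemma wd1 (T : finType) (e : rel T) x y :
  within_dist e 1 x y <-> (x = y \/ e x y).
Proof.
split.
- case=> [[|z [|z' p]]] [//= Hs [Hp Hl]]; first by left.
  by right; move: Hp => /= /andP [H _]; rewrite -Hl.
- case=> [<-|H]; first by exists [::].
  by exists [:: y]; rewrite /= H.
Qed.

Lemma wd2 (T : finType) (e : rel T) x y :
  within_dist e 2 x y <-> (exists z, (x = z \/ e x z) /\ (z = y \/ e z y)).
Proof.
split.
- case=> [[|z [|z' [|z'' p]]]] [//= Hs [Hp Hl]].
  + by exists x; split; left.
  + by exists x; split; [left | right; move: Hp => /andP [H _]; rewrite -Hl].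
  + move: Hp => /and3P [H1 H2 _]; exists z; split; right => //.
    by rewrite -Hl.
- case=> z [[<-|H1] [<-|H2]].
  + by exists [::].
  + by exists [:: y]; rewrite /= H2.
  + by exists [:: z]; rewrite /= H1.
  + by exists [:: z; y]; rewrite /= H1 H2.
Qed.

Lemma restrict (T : finType) (e : rel T) w v phi c :
  [/\ (forall a, within_dist e 2 w a -> within_dist e 2 v (phi a)),
        (forall b, within_dist e 2 v b -> exists2 a, within_dist e 2 w a & phi a = b),
        (forall a b, within_dist e 2 w a -> within_dist e 2 w b -> phi a = phi b -> a = b),
        phi w = v &
        (forall a b, within_dist e 2 w a -> within_dist e 2 w b ->
           e (phi a) (phi b) = e a b)] ->
  (w = c \/ e w c) -> d_equiv e 1 c (phi c).
Proof.
case=> H1 H2 H3 H4 H5 Hc.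
have inc : forall a, within_dist e 1 c a -> within_dist e 2 w a.
  by move=> a /wd1 Ha; apply/wd2; exists c.
have Hw : within_dist e 2 w w by apply/wd2; exists w; split; left.
have Hcw : within_dist e 2 w c by apply/wd2; exists w; split; [left|].
have Hpc : v = phi c \/ e v (phi c).
  case: Hc => [<-|Hc]; first by left.
  by right; rewrite -H4 H5.
exists phi; split.
- move=> a Ha; apply/wd1; have Ha2 := inc a Ha.
  move/wd1: Ha => [<-|Ha]; first by left.
  by right; rewrite H5.
- move=> b /wd1 Hb.
  have [a Ha Hab] : exists2 a, within_dist e 2 w a & phi a = b.
    by apply: H2; apply/wd2; exists (phi c).
  exists a => //; apply/wd1.
  case: Hb => [Hb|Hb]; first by left; apply: H3; rewrite // Hab.
  by right; rewrite -H5 // Hab.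
- by move=> a b Ha Hb; apply: H3; apply: inc.
- by [].
- by move=> a b Ha Hb; apply: H5; apply: inc.
Qed.

Theorem theorem1 (T : finType) (e : rel T)
  (e_sym : symmetric e) (e_irr : irreflexive e) (v : T) :
  (exists u : T,
     [/\ e v u,
         (forall x : T, x != u -> ~ d_equiv e 1 x u) &
         (forall v' : T, within_dist e 1 u v' -> v' != u -> v' != v ->
            ~ d_equiv e 1 v' v)]) ->
  forall w : T, w != v -> ~ d_equiv e 2 w v.
Proof.
case=> u [Hvu Hu Hv] w Hwv [phi Hphi].
have Hphi' := Hphi.
case: Hphi => H1 H2 H3 H4 H5.
have [u' Hu' Hpu'] : exists2 u', within_dist e 2 w u' & phi u' = u.
  by apply: H2; apply/wd2; exists v; split; [left|right].
have Hw : within_dist e 2 w w by apply/wd2; exists w; split; left.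
have Hwu' : e w u' by rewrite -H5 // H4 Hpu'.
have Eu : u' = u.
  case: (eqVneq u' u) => // Hne; exfalso; apply: (Hu u' Hne).
  rewrite -Hpu'. exact: (@restrict _ _ _ _ _ _ Hphi' (or_intror Hwu')).
subst u'.
apply: (Hv w).
- by apply/wd1; right; rewrite e_sym.
- by apply/eqP => Ewu; move: Hwu'; rewrite Ewu e_irr.
- exact: Hwv.
- by rewrite -H4; exact: (@restrict _ _ _ _ _ _ Hphi' (or_introl erefl)).
Qed.
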